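(* Let $k<l$ be positive integers and let $\gamma\in U(k,l)$ be diagonalizable with all eigenvalues of modulus $1$. Then $\gamma$ has an eigenvector lying in the closure $\overline{N_-^{k,l}}$ of $N_-^{k,l}$ in $\mathbb{C}^{k+l}$.
   Context: $\prec u,v\succ_{k,l}=-\sum_{j=1}^k u_j\bar v_j+\sum_{j=k+1}^{k+l}u_j\bar v_j$ on $\mathbb{C}^{k+l}$; $N_-^{k,l}=\{v:\prec v,v\succ_{k,l}<0\}$; $U(k,l)\subset GL(k+l,\mathbb{C})$ is the group of matrices preserving this form. Eigenvectors are nonzero. *)

(* Defs.v *)
From HB Require Import structures.
From mathcomp Require Import all_boot all_order all_algebra.
From mathcomp Require Import complex.
Set Implicit Arguments. Unset Strict Implicit. Unset Printing Implicit Defensive.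
Import Order.TTheory GRing.Theory Num.Theory.
Local Open Scope ring_scope.

Definition hform (R : rcfType) (k l : nat) (u v : 'cV[R[i]]_(k + l)) : R[i] :=
  - (\sum_(j < k + l | (j < k)%N) u j 0 * (v j 0)^*)
  + \sum_(j < k + l | (k <= j)%N) u j 0 * (v j 0)^*.

Definition Nminus (R : rcfType) (k l : nat) : pred 'cV[R[i]]_(k + l) :=
  fun v => hform v v < 0.

(* Closure in C^{k+l} for the standard (Euclidean) topology, written out:
   v is a limit of points of A. *)
Definition in_closure (R : rcfType) (n : nat) (A : pred 'cV[R[i]]_n)
    (v : 'cV[R[i]]_n) : Prop :=
  forall eps : R, 0 < eps ->
    exists2 w, A w & \sum_(j < n) `|v j 0 - w j 0| ^+ 2 < (eps%:C)%C.

Definition in_Ukl (R : rcfType) (k l : nat) (g : 'M[R[i]]_(k + l)) : Prop :=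
  g \in unitmx /\ forall u v, hform (g *m u) (g *m v) = hform u v.

Definition is_eigenvector (R : rcfType) (n : nat) (g : 'M[R[i]]_n)
    (v : 'cV[R[i]]_n) : Prop :=
  v != 0 /\ exists a : R[i], g *m v = a *: v.

(* Main.v *)
Require Import Defs.
From HB Require Import structures.
From mathcomp Require Import all_boot all_order all_algebra.
From mathcomp Require Import complex.
Import Order.TTheory GRing.Theory Num.Theory.
Local Open Scope ring_scope.

Section H.
Variables (R : rcfType) (k l : nat).
Local Notation V := 'cV[R[i]]_(k + l).

Lemma hformDl (u1 u2 v : V) : hform (u1 + u2) v = hform u1 v + hform u2 v.
Proof.
rewrite /hform.
under eq_bigr do rewrite mxE mulrDl.
under [X in _ + X = _]eq_bigr do rewrite mxE mulrDl.
rewrite !big_split /= opprD; rewrite addrACA //.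
Qed.

Lemma hformDr (u v1 v2 : V) : hform u (v1 + v2) = hform u v1 + hform u v2.
Proof.
rewrite /hform.
under eq_bigr do rewrite mxE rmorphD mulrDr.
under [X in _ + X = _]eq_bigr do rewrite mxE rmorphD mulrDr.
rewrite !big_split /= opprD; rewrite addrACA //.
Qed.

Lemma hformZl a (u v : V) : hform (a *: u) v = a * hform u v.
Proof.
rewrite /hform mulrDr mulrN !mulr_sumr.
by congr (- _ + _); apply: eq_bigr => j _; rewrite mxE mulrA.
Qed.

Lemma hformZr a (u v : V) : hform u (a *: v) = a^* * hform u v.
Proof.
rewrite /hform mulrDr mulrN !mulr_sumr.
by congr (- _ + _); apply: eq_bigr => j _; rewrite mxE rmorphM mulrCA.
Qed.

Lemma hform0l (v : V) : hform 0 v = 0.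
Proof. by rewrite -(scale0r 0) hformZl mul0r. Qed.

Lemma hform0r (v : V) : hform v 0 = 0.
Proof. by rewrite -(scale0r 0) hformZr rmorph0 mul0r. Qed.

Lemma hform_suml (I : finType) (F : I -> V) v :
  hform (\sum_i F i) v = \sum_i hform (F i) v.
Proof.
exact: (big_morph (fun u => hform u v) (fun a b => hformDl a b v) (hform0l v)).
Qed.

Lemma hform_sumr (I : finType) (F : I -> V) v :
  hform v (\sum_i F i) = \sum_i hform v (F i).
Proof.
exact: (big_morph (fun u => hform v u) (fun a b => hformDr v a b) (hform0r v)).
Qed.

Lemma hform_real (v : V) : hform v v \is Num.real.
Proof.
rewrite /hform rpredD ?rpredN // rpred_sum // => j _;
  exact/ger0_real/mul_conjC_ge0.
Qed.

End H.

Theorem mainTheorem14 (R : rcfType) (k l : nat) (g : 'M[R[i]]_(k + l)) :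
  (0 < k)%N -> (k < l)%N ->
  in_Ukl g ->
  diagonalizable g ->
  (forall a : R[i], eigenvalue g a -> `|a| = 1) ->
  exists v : 'cV[R[i]]_(k + l), is_eigenvector g v /\ in_closure (@Nminus R k l) v.
Proof.
move=> k0 _ [gU gP] [P Pu /(diagonalizable_forLR Pu) [d gE]] habs.
have dT : diagonalizable g^T.
  exists (invmx P^T); first by rewrite unitmx_inv unitmx_tr.
  apply/(diagonalizable_forLR _); first by rewrite unitmx_inv unitmx_tr.
  exists d; rewrite invmxK gE /mxpoly.conjmx !pinvmxE ?unitmx_tr ?unitmx_inv // invmxK.
  rewrite [LHS](_ : _ = P^T *m (invmx P *m diag_mx d)^T); last exact: trmx_mul.
  rewrite -mulmxA; congr (_ *m _).
  transitivity ((diag_mx d)^T *m (invmx P)^T); first exact: trmx_mul.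
  by rewrite tr_diag_mx trmx_inv.
case: (@diagonalizablePeigen _ _ g^T) => /(_ dT) [rs urs rsP] _.
rewrite (big_nth 0) big_mkord in rsP.
pose i0 : 'I_(k + l) := Ordinal (ltn_addr l k0).
pose e0 : 'cV[R[i]]_(k + l) := delta_mx i0 0.
have : (e0^T <= \sum_(j < size rs) eigenspace g^T rs`_j)%MS.
  by rewrite rsP submx1.
move=> /sub_sumsmxP [u_ e0E].
pose x j := (u_ j *m eigenspace g^T rs`_j)^T.
have xE j : g *m x j = rs`_j *: x j.
  have /eigenspaceP h : (u_ j *m eigenspace g^T rs`_j <= eigenspace g^T rs`_j)%MS
    by apply: submxMl.
  have e1 : (u_ j *m eigenspace g^T rs`_j *m g^T)^T = g^T^T *m (u_ j *m eigenspace g^T rs`_j)^T := trmx_mul _ _.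
  rewrite trmxK in e1; rewrite /x -e1 h.
  by apply/matrixP => a b; rewrite !mxE.
have e0x : e0 = \sum_j x j.
  by rewrite -[e0]trmxK e0E /x raddf_sum.
have eig j : x j != 0 -> `|rs`_j| = 1.
  move=> xj0; apply: habs.
  rewrite /eigenvalue /eigenspace kermx_eq0 row_free_unit; apply/negP => U.
  have h0 : (g - (rs`_j)%:M) *m x j = 0.
    rewrite mulmxBl xE mul_scalar_mx; exact: subrr.
  move: xj0; rewrite -(mulKmx U (x j)) h0 mulmx0 eqxx //.
have orth i j : i != j -> hform (x i) (x j) = 0.
  move=> ij.
  have [xi|xi0] := eqVneq (x i) 0; first by rewrite xi; exact: hform0l.
  have [xj|xj0] := eqVneq (x j) 0; first by rewrite xj; exact: hform0r.
  have e : hform (rs`_i *: x i) (rs`_j *: x j) = hform (x i) (x j).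
    exact: (etrans (congr2 (@hform R k l) (esym (xE i)) (esym (xE j))) (gP _ _)).
  move: e; rewrite hformZl hformZr mulrA => /eqP.
  rewrite -subr_eq0 -{2}[hform _ _]mul1r -mulrBl mulf_eq0 => /orP[|/eqP//].
  rewrite subr_eq0 => /eqP abc; exfalso; move/negP: ij; apply.
  have ab : rs`_i = rs`_j.
    have := eig j xj0 => /eqP; rewrite -(@eqrXn2 _ 2) ?normr_ge0 // normCK expr1n.
    move=> /eqP bb; by rewrite -[rs`_i]mulr1 -bb (mulrC rs`_j) mulrA abc mul1r.
  apply/eqP; apply: val_inj; apply/eqP; rewrite -(@nth_uniq _ 0 rs i j) ?ltn_ord //; exact/eqP.
have hsum : hform e0 e0 = \sum_j hform (x j) (x j).
  rewrite e0x hform_suml; apply: eq_bigr => i _.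
  rewrite hform_sumr (bigD1 i) //= big1 ?addr0 // => j ji; apply: orth.
  by rewrite eq_sym.
have he0 : hform e0 e0 = -1.
  rewrite /hform (bigD1 i0) //= big1 => [|j /andP[_ ne]]; last first.
    by rewrite !mxE (negbTE ne) /= mul0r.
  rewrite [X in _ + X]big1 => [|j kj]; last first.
    rewrite !mxE; suff -> : (j == i0) = false by rewrite mul0r.
    by apply/negbTE; apply: contraTneq kj => ->; rewrite -ltnNge.
  by rewrite !mxE eqxx /= conjC1 mul1r !addr0.
case: (boolP [exists j, hform (x j) (x j) < 0]).
  case/existsP => j hj; exists (x j); split.
    split; last by exists rs`_j.
    by apply: contraTneq hj => ->; rewrite hform0l ltxx.
  move=> eps ep; exists (x j) => //.
  rewrite big1 => [|a _]; last by rewrite subrr normr0 expr0n.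
  by rewrite ltcR.
rewrite negb_exists => /forallP hn; exfalso.
have : 0 <= hform e0 e0.
  rewrite hsum sumr_ge0 // => j _.
  by rewrite real_leNgt ?real0 ?hform_real ?hn.
by rewrite he0 ler0N1.
Qed.
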